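(* Let $f$ be a real quadratic form on $\mathbb R^n$. Then (1) at least one of the sets $\mathrm{St}(f)$ and $\widetilde C(f)$ is empty; (2) at least one of the sets $C(f)$ and $\widetilde{\mathrm{St}}(f)$ is empty.
   Context: $H_n=\{x\in\mathbb R^n:\sum x_i=0\}$. $C^-(f)=\{h\in H_n\setminus\{0\}: \partial f/\partial x_i(h)\le0\ \forall i\}$, $C^+(f)$ likewise with $\ge0$, $C(f)=C^+(f)\cup C^-(f)$. $\widetilde C(f)=\{v\in C(f):\ (\partial f/\partial x_1(v),\dots,\partial f/\partial x_n(v))\ne 0\}$. $\mathrm{St}(f)=\{a\in\mathbb R^n: a_i>0\ \forall i,\ \partial f/\partial x_i(a)=\partial f/\partial x_j(a)\ \forall i,j\}$. $P_n=\{x:x_i>0,\ \sum x_i=1\}$, $\overline P_n=\{x: x_i\ge0,\ \sum x_i=1\}$. A vector $u\in P_n$ is $P$-faithful for $f$ if $f(u)>0$ and $f(u)\le f(w)$ for all $w\in\overline P_n$, with $f(u)<f(w)$ whenever $w\in\overline P_n\setminus P_n$; $\widetilde{\mathrm{St}}(f)$ is the set of $P$-faithful vectors. *)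

(* Defs.v *)
(* quadratic forms as 2-homogeneous multivariate polynomials
   (multinomials' mpoly) over an arbitrary real closed field R (R = the reals
   is the paper's case); points of R^n are functions 'I_n -> R. *)
From HB Require Import structures.
From mathcomp Require Import all_boot all_order all_algebra.
From mathcomp Require Import mpoly.
Set Implicit Arguments. Unset Strict Implicit. Unset Printing Implicit Defensive.
Import Order.TTheory GRing.Theory Num.Theory.
Local Open Scope ring_scope.

Section Defs.
Variables (R : rcfType) (n : nat).
Implicit Types (f : {mpoly R[n]}) (x : 'I_n -> R).

Definition pd f (i : 'I_n) x : R := (mderiv i f).@[x].

Definition inH x : Prop := \sum_(i < n) x i = 0.

Definition Cminus f x : Prop :=
  inH x /\ x <> (fun _ => 0) /\ forall i, pd f i x <= 0.
Definition Cplus f x : Prop :=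
  inH x /\ x <> (fun _ => 0) /\ forall i, pd f i x >= 0.
Definition Cset f x : Prop := Cplus f x \/ Cminus f x.

Definition Ctilde f x : Prop := Cset f x /\ exists i, pd f i x <> 0.

Definition St f x : Prop :=
  (forall i, 0 < x i) /\ forall i j, pd f i x = pd f j x.

Definition inP x : Prop := (forall i, 0 < x i) /\ \sum_(i < n) x i = 1.
Definition inPbar x : Prop := (forall i, 0 <= x i) /\ \sum_(i < n) x i = 1.

(* P-faithful vectors: St~(f) *)
Definition Pfaithful f u : Prop :=
  inP u /\ 0 < f.@[u] /\
  (forall w, inPbar w -> f.@[u] <= f.@[w]) /\
  (forall w, inPbar w -> ~ inP w -> f.@[u] < f.@[w]).

End Defs.

(* Main.v *)
Require Import Defs.
From HB Require Import structures.
From mathcomp Require Import all_boot all_order all_algebra.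
From mathcomp Require Import mpoly.
From mathcomp Require Import ring lra.
From Stdlib Require FunctionalExtensionality Classical_Prop.
Import Order.TTheory GRing.Theory Num.Theory.
Local Open Scope ring_scope.
Set Implicit Arguments. Unset Strict Implicit.

Section Aux.
Variables (R : rcfType) (n : nat).
Implicit Types (f p q : {mpoly R[n]}) (x y : 'I_n -> R).

Lemma mdeg2P (m : 'X_{1..n}) : mdeg m = 2%N -> exists i j, m = (U_(i) + U_(j))%MM.
Proof.
move=> hm.
have hm0 : m != 0%MM by rewrite -mdeg_eq0 hm.
have [i hi] : exists i, m i != 0%N.
  case: (pickP (fun i => m i != 0%N)) => [i hi|h]; first by exists i.
  move: hm0; suff -> : m = 0%MM by rewrite eqxx.
  by apply/mnmP => k; rewrite mnmE; move: (h k) => /= /negbFE /eqP.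
have em : m = ((m - U_(i)) + U_(i))%MM.
  apply/mnmP => k; rewrite !mnmE; case: eqP => [<-|_]; last by rewrite subn0 addn0.
  by rewrite subnK // lt0n.
have : mdeg (m - U_(i))%MM == 1%N.
  by move: hm; rewrite {1}em mdegD mdeg1 => /eqP; rewrite addn1 eqSS.
case/mdeg1P => j /eqP hj.
by exists j, i; rewrite {1}em hj.
Qed.

Lemma homog2_ind (P : {mpoly R[n]} -> Prop) :
  P 0 -> (forall p q, P p -> P q -> P (p + q)) -> (forall c p, P p -> P (c *: p)) ->
  (forall i j, P ('X_i * 'X_j)) -> forall f, f \is 2.-homog -> P f.
Proof.
move=> P0 PD PZ PX f hf.
rewrite (mpolyE f) big_seq; apply: big_ind => // m hm.
apply: PZ; have [i [j ->]] := mdeg2P (dhomog_mf hf hm).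
by rewrite mpolyXD.
Qed.

Lemma mderivXU i k : mderiv k ('X_i : {mpoly R[n]}) = (i == k)%:R%:MP.
Proof.
rewrite mderivX mnm1E; case: eqP => [<-|_]; last by rewrite scale0r.
have -> : (U_(i) - U_(i))%MM = 0%MM by apply/mnmP => k'; rewrite !mnmE subnn.
by rewrite mpolyX0 scale1r.
Qed.


Definition Bf f x y := \sum_k y k * pd f k x.
Definition ad x t y := fun k : 'I_n => x k + t * y k.

Lemma pdD p q k x : pd (p + q) k x = pd p k x + pd q k x.
Proof. by rewrite /pd mderivD mevalD. Qed.
Lemma pdZ c p k x : pd (c *: p) k x = c * pd p k x.
Proof. by rewrite /pd mderivZ mevalZ. Qed.
Lemma pd0 k x : pd (0 : {mpoly R[n]}) k x = 0.
Proof. by rewrite /pd mderiv0 meval0. Qed.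
Lemma pdX i j k x : pd ('X_i * 'X_j) k x = (i == k)%:R * x j + x i * (j == k)%:R.
Proof. by rewrite /pd mderivM !mderivXU mevalD !mevalM !mevalC !mevalXU. Qed.

Lemma BfD p q x y : Bf (p + q) x y = Bf p x y + Bf q x y.
Proof. by rewrite /Bf -big_split; apply: eq_bigr => k _; rewrite pdD mulrDr. Qed.
Lemma BfZ c p x y : Bf (c *: p) x y = c * Bf p x y.
Proof. by rewrite /Bf mulr_sumr; apply: eq_bigr => k _; rewrite pdZ; ring. Qed.
Lemma Bf0 x y : Bf 0 x y = 0.
Proof. by rewrite /Bf big1 // => k _; rewrite pd0 mulr0. Qed.

Lemma sum_delta (g : 'I_n -> R) i c : \sum_k g k * ((i == k)%:R * c) = g i * c.
Proof.
rewrite (bigD1 i) //= eqxx mul1r big1 ?addr0 // => k hk.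
by rewrite eq_sym (negbTE hk) mul0r mulr0.
Qed.

Lemma BfX i j x y : Bf ('X_i * 'X_j) x y = y i * x j + x i * y j.
Proof.
rewrite /Bf; under eq_bigr do rewrite pdX mulrDr.
rewrite big_split /= (sum_delta y i (x j)).
under eq_bigr => k _ do rewrite [x i * _]mulrC.
by rewrite sum_delta [y j * _]mulrC.
Qed.

Lemma Bf_sym f x y : f \is 2.-homog -> Bf f x y = Bf f y x.
Proof.
move=> hf; move: f hf; apply: homog2_ind.
- by rewrite !Bf0.
- by move=> p q hp hq; rewrite !BfD hp hq.
- by move=> c p hp; rewrite !BfZ hp.
- by move=> i j; rewrite !BfX; ring.
Qed.

Lemma Bf_diag f x : f \is 2.-homog -> Bf f x x = 2 * f.@[x].
Proof.
move=> hf; move: f hf; apply: homog2_ind.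
- by rewrite !Bf0 meval0 mulr0.
- by move=> p q hp hq; rewrite !BfD hp hq mevalD; ring.
- by move=> c p hp; rewrite !BfZ hp mevalZ; ring.
- by move=> i j; rewrite !BfX mevalM !mevalXU; ring.
Qed.

Lemma f_expand f x y t : f \is 2.-homog ->
  f.@[ad x t y] = f.@[x] + t * Bf f x y + t ^+ 2 * f.@[y].
Proof.
move=> hf; move: f hf; apply: homog2_ind.
- by rewrite Bf0 !meval0; ring.
- by move=> p q hp hq; rewrite BfD !mevalD hp hq; ring.
- by move=> c p hp; rewrite BfZ !mevalZ hp; ring.
- by move=> i j; rewrite BfX !mevalM !mevalXU /ad; ring.
Qed.


Lemma pos_sum (a g : 'I_n -> R) i0 : (forall i, 0 < a i) -> (forall i, 0 <= g i) ->
  g i0 != 0 -> 0 < \sum_i a i * g i.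
Proof.
move=> ha hg hi0; rewrite (bigD1 i0) //=.
have hA : 0 < a i0 * g i0 by rewrite mulr_gt0 // lt0r hi0 hg.
have hS : 0 <= \sum_(i | i != i0) a i * g i.
  by apply: sumr_ge0 => i _; rewrite mulr_ge0 // ltW.
lra.
Qed.

Lemma part1 f a v : f \is 2.-homog -> St f a -> Ctilde f v -> False.
Proof.
move=> hf [ha hc] [hC [i0 hi0]].
have hH : inH v by case: hC => [[]|[]].
have e1 : Bf f a v = 0.
  rewrite /Bf; under eq_bigr => k _ do rewrite (hc k i0).
  by rewrite -mulr_suml hH mul0r.
rewrite Bf_sym // /Bf in e1.
case: hC => [[_ [_ hp]]|[_ [_ hm]]].
- have := pos_sum ha hp (introN eqP hi0); rewrite e1; lra.
- have hi0' : - pd f i0 v != 0 by rewrite oppr_eq0; apply/eqP.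
  have hm' : forall i, 0 <= - pd f i v by move=> i; rewrite oppr_ge0.
  have := pos_sum ha hm' hi0'.
  under eq_bigr => k _ do rewrite mulrN.
  rewrite sumrN e1; lra.
Qed.


Lemma small (b F T : R) : 0 < T -> (forall s, 0 < s <= T -> 0 <= s * b + s ^+ 2 * F) -> 0 <= b.
Proof.
move=> hT hg; rewrite leNgt; apply/negP => hb.
set A := `|F|; set D := T * A - b.
have hA : 0 <= A by rewrite normr_ge0.
have hFA : F <= A by rewrite ler_norm.
have hD : 0 < D by rewrite /D; nra.
set s := T * (- b) / D.
have key : s * D = T * (- b) by rewrite /s mulrAC -mulrA divff ?mulr1 // gt_eqF.
have hs : 0 < s by rewrite /s divr_gt0 // mulr_gt0 // oppr_gt0.
have hsT : s <= T by rewrite /s ler_pdivrMr //; rewrite /D; nra.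
have e : (s * b + s ^+ 2 * A) * D = - (s * b ^+ 2).
  apply/eqP; rewrite -subr_eq0.
  have -> : (s * b + s ^+ 2 * A) * D - - (s * b ^+ 2) = s * A * (s * D - T * (- b)).
    by rewrite /D; ring.
  by rewrite key subrr mulr0.
have h1 := hg s (andb_true_intro (conj hs hsT)).
have h2 : s ^+ 2 * F <= s ^+ 2 * A by rewrite ler_wpM2l // sqr_ge0.
have h3 : 0 < s * b ^+ 2 by apply: mulr_gt0 => //; nra.
nra.
Qed.

Lemma neg_exists (v : 'I_n -> R) : inH v -> v <> (fun _ => 0) -> exists i, v i < 0.
Proof.
move=> hH hv.
case: (pickP (fun i => v i < 0)) => [i hi|h]; first by exists i.
exfalso; apply: hv; apply: FunctionalExtensionality.functional_extensionality => k.
have hge : forall i, true -> 0 <= v i by move=> i _; rewrite leNgt h.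
by apply: (psumr_eq0P hge).
Qed.


Lemma boundary (u v : 'I_n -> R) : inP u -> inH v -> (exists i, v i < 0) ->
  exists T, 0 < T /\ (forall s, 0 <= s <= T -> inPbar (ad u s v)) /\ ~ inP (ad u T v).
Proof.
move=> [hu hsu] hH [i0 hi0].
case: (arg_minP (P := fun i => v i < 0) (fun i => u i / - v i) hi0) => k hk hmin.
have hvk : 0 < - v k by rewrite oppr_gt0.
exists (u k / - v k); split; first by rewrite divr_gt0.
split.
- move=> s /andP [hs0 hsT]; split.
  + move=> i; rewrite /ad; case: (ltP (v i) 0) => hvi.
    * have := hmin i hvi; rewrite /= => hki.
      have hvi' : 0 < - v i by rewrite oppr_gt0.
      have : s <= u i / - v i by apply: le_trans hsT hki.
      rewrite ler_pdivlMr // => h; lra.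
    * have := hu i; have : 0 <= s * v i by rewrite mulr_ge0.
      lra.
  + rewrite /ad big_split /= -mulr_sumr hH hsu; ring.
- move=> [hp _]; have := hp k; rewrite /ad.
  have -> : u k + u k / - v k * v k = 0.
    have hv0 : v k != 0 by rewrite lt_eqF.
    by field.
  by rewrite ltxx.
Qed.


Lemma core f (u v : 'I_n -> R) : f \is 2.-homog -> Pfaithful f u -> inH v ->
  v <> (fun _ => 0) -> (forall i, pd f i v <= 0) -> False.
Proof.
move=> hf [hPu [_ [hmin hstrict]]] hH hv0 hle.
have [T [hT [hPb hnP]]] := boundary hPu hH (neg_exists hH hv0).
set b := Bf f u v; set F := f.@[v].
have hg : forall s, 0 < s <= T -> 0 <= s * b + s ^+ 2 * F.
  move=> s /andP [hs hsT].
  have := hmin _ (hPb s (andb_true_intro (conj (ltW hs) hsT))).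
  rewrite f_expand // -/b -/F; lra.
have hb0 := small hT hg.
have hb1 : b = \sum_i u i * pd f i v by rewrite /b Bf_sym.
have hterm : forall i, true -> 0 <= - (u i * pd f i v).
  by move=> i _; rewrite oppr_ge0 mulr_ge0_le0 // ltW //; case: hPu.
have hsum0 : \sum_i - (u i * pd f i v) = 0.
  rewrite sumrN -hb1; apply/eqP; rewrite oppr_eq0 eq_le hb0 andbT.
  rewrite hb1 -oppr_ge0 -sumrN; exact: sumr_ge0.
have hpd0 : forall i, pd f i v = 0.
  move=> i; have := @psumr_eq0P R _ xpredT (fun i => - (u i * pd f i v)) hterm hsum0 i isT.
  move/eqP; rewrite oppr_eq0 mulf_eq0 => /orP [|/eqP //].
  by case: hPu => hu _; rewrite gt_eqF.
have hF : F = 0.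
  have := Bf_diag v hf; rewrite /Bf big1 => [|i _]; last by rewrite hpd0 mulr0.
  rewrite -/F => h; lra.
have hb : b = 0 by rewrite hb1 big1 // => i _; rewrite hpd0 mulr0.
have := hstrict _ (hPb T (andb_true_intro (conj (ltW hT) (lexx T)))) hnP.
rewrite f_expand // -/b -/F hb hF; lra.
Qed.

Lemma pdN f (v : 'I_n -> R) i : f \is 2.-homog -> pd f i (fun k => - v k) = - pd f i v.
Proof.
move=> hf.
have E : forall x : 'I_n -> R, pd f i x = Bf f x (fun k => (i == k)%:R).
  move=> x; rewrite /Bf (bigD1 i) //= eqxx mul1r big1 ?addr0 // => k hk.
  by rewrite eq_sym (negbTE hk) mul0r.
rewrite !E Bf_sym // [in RHS]Bf_sym // /Bf -sumrN.
by apply: eq_bigr => k _; rewrite mulNr.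
Qed.

End Aux.

Unset Implicit Arguments.
Set Strict Implicit.

Theorem proposition1 (R : rcfType) (n : nat) (f : {mpoly R[n]})
  (hf : f \is 2.-homog) :
  ((forall a : 'I_n -> R, ~ St f a) \/ (forall v : 'I_n -> R, ~ Ctilde f v)) /\
  ((forall v : 'I_n -> R, ~ Cset f v) \/ (forall u : 'I_n -> R, ~ Pfaithful f u)).
Proof.
split.
- case: (Classical_Prop.classic (exists a, St f a)) => [[a ha]|h].
  + by right => v hv; apply: (part1 hf ha hv).
  + by left => a ha; apply: h; exists a.
- case: (Classical_Prop.classic (exists v, Cset f v)) => [[v hv]|h].
  + right => u hu; case: hv => [[hH [hv0 hp]]|[hH [hv0 hm]]].
    * apply: (core (v := fun k => - v k) hf hu).
      -- by rewrite /inH sumrN hH oppr0.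
      -- move=> e; apply: hv0; apply: FunctionalExtensionality.functional_extensionality => k.
         by have := congr1 (fun g => g k) e => /= /eqP; rewrite oppr_eq0 => /eqP.
      -- by move=> i; rewrite pdN // oppr_le0.
    * exact: (core hf hu hH hv0 hm).
  + by left => v hv; apply: h; exists v.
Qed.
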